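(* Let $G=(V_1\cup V_2,E)$ be a finite simple graph with $V_1\cap V_2=\emptyset$ such that the induced subgraphs $G[V_1]$ and $G[V_2]$ both have edge-connectivity at least $n$. Assume that every vertex of $V_1$ has at least $m$ neighbors in $V_2$, where $m\ge n+2$. Let $v_1\in V_1$ and $v_2\in V_2$ be adjacent vertices such that there are $m$ paths in $G$ from $v_1$ to $v_2$ that are pairwise internally vertex-disjoint and which only use edges having one endpoint in $V_1$ and the other in $V_2$. Then there are $m+n$ pairwise edge-disjoint paths in $G$ connecting $v_1$ and $v_2$.
   Context: A graph is $\ell$-edge-connected if it has more than one vertex and removing any set of fewer than $\ell$ edges leaves it connected; its edge-connectivity is the largest such $\ell$. The single edge $\{v_1,v_2\}$ counts as a path. *)

(* Defs.v *)
From mathcomp Require Import all_boot.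
Set Implicit Arguments. Unset Strict Implicit. Unset Printing Implicit Defensive.

Section Graphs.
Variable T : finType.

Definition simple_graph (e : rel T) : Prop := symmetric e /\ irreflexive e.

(* Edges are unordered pairs {a, b}, represented as 2-element sets. *)
Definition induced_edge_connected (e : rel T) (S : {set T}) (l : nat) : Prop :=
  1 < #|S| /\
  forall F : {set {set T}}, #|F| < l ->
    forall x y, x \in S -> y \in S ->
      connect (fun a b => [&& a \in S, b \in S, e a b & [set a; b] \notin F]) x y.

(* A path from x to y is given by its vertex sequence x :: p (p = the
   vertices after x); consecutive vertices adjacent, no repeated vertex,
   ending at y. *)
Definition is_path (e : rel T) (x y : T) (p : seq T) : bool :=
  [&& path e x p, last x p == y & uniq (x :: p)].

Definition path_edges (x : T) (p : seq T) : {set {set T}} :=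
  [set:: [seq [set ab.1; ab.2] | ab <- zip (x :: p) p]].

Definition interior (x y : T) (p : seq T) : {set T} :=
  [set u | [&& u \in x :: p, u != x & u != y]].

Definition crossing_path (V1 V2 : {set T}) (x : T) (p : seq T) : bool :=
  all (fun ab : T * T => ((ab.1 \in V1) && (ab.2 \in V2))
                        || ((ab.1 \in V2) && (ab.2 \in V1)))
      (zip (x :: p) p).

End Graphs.

(* Main.v *)
Require Import Defs.
From mathcomp Require Import all_boot all_algebra zify.
Set Implicit Arguments. Unset Strict Implicit. Unset Printing Implicit Defensive.
Import GRing.Theory Num.Theory.

Section Gen.
Variable T : finType.
Implicit Types (x y a b u : T) (p : seq T).

Lemma zip_fst x p : map fst (zip (x :: p) p) = belast x p.
Proof. by elim: p x => //= y p IH x; rewrite IH. Qed.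

Lemma zip_snd x p : map snd (zip (x :: p) p) = p.
Proof. by elim: p x => //= y p IH x; rewrite IH. Qed.

Lemma path_zip (r : rel T) x p a b :
  path r x p -> (a, b) \in zip (x :: p) p -> r a b.
Proof.
elim: p x => //= y p IH x /andP[rxy pp]; rewrite in_cons => /orP[/eqP[-> ->]//|].
exact: IH.
Qed.

Lemma set2_eq a b c d : [set a; b] = [set c; d] -> (a = c /\ b = d) \/ (a = d /\ b = c).
Proof.
move=> E.
have ha : a \in [set c; d] by rewrite -E !inE eqxx.
have hb : b \in [set c; d] by rewrite -E !inE eqxx orbT.
have hc : c \in [set a; b] by rewrite E !inE eqxx.
have hd : d \in [set a; b] by rewrite E !inE eqxx orbT.
move: ha hb hc hd; rewrite !inE.
do 4 case/orP=> /eqP ?; subst; by [left|right].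
Qed.

Lemma in_path_edges E x p :
  E \in path_edges x p -> exists a b, E = [set a; b] /\ (a, b) \in zip (x :: p) p.
Proof. by rewrite /path_edges inE => /mapP[[a b] ab ->]; exists a, b. Qed.

Lemma path_edgesP a b x p :
  (a, b) \in zip (x :: p) p -> [set a; b] \in path_edges x p.
Proof. by move=> ab; rewrite /path_edges inE; apply/mapP; exists (a, b). Qed.

Lemma uniq_belast x p : uniq (x :: p) -> uniq (belast x p).
Proof. by rewrite lastI rcons_uniq => /andP[]. Qed.

Lemma last_notin_belast x p : uniq (x :: p) -> last x p \notin belast x p.
Proof. by rewrite lastI rcons_uniq => /andP[]. Qed.

Lemma count_fst_le1 x p a : uniq (x :: p) ->
  count (fun ab : T * T => ab.1 == a) (zip (x :: p) p) <= 1.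
Proof.
move=> U; have := count_uniq_mem a (uniq_belast U).
rewrite -zip_fst count_map.
have -> : count (preim fst (pred1 a)) (zip (x :: p) p) =
          count (fun ab : T * T => ab.1 == a) (zip (x :: p) p).
  by apply: eq_count => -[c d].
by move=> ->; case: (_ \in _).
Qed.

Lemma count_snd_le1 x p a : uniq (x :: p) ->
  count (fun ab : T * T => ab.2 == a) (zip (x :: p) p) <= 1.
Proof.
move=> U; have Up : uniq p by case/andP: U.
have := count_uniq_mem a Up.
rewrite -{1}(zip_snd x p) count_map.
have -> : count (preim snd (pred1 a)) (zip (x :: p) p) =
          count (fun ab : T * T => ab.2 == a) (zip (x :: p) p).
  by apply: eq_count => -[c d].
by move=> ->; case: (_ \in _).
Qed.

Lemma count_fst x p a : uniq (x :: p) ->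
  count (fun ab : T * T => ab.1 == a) (zip (x :: p) p) =
  ((a \in x :: p) && (a != last x p)).
Proof.
move=> U; have := count_uniq_mem a (uniq_belast U).
rewrite -zip_fst count_map.
have -> : count (preim fst (pred1 a)) (zip (x :: p) p) =
          count (fun ab : T * T => ab.1 == a) (zip (x :: p) p).
  by apply: eq_count => -[c d].
move=> ->; have := last_notin_belast U.
rewrite [in RHS]lastI mem_rcons in_cons zip_fst.
case: (a =P last x p) => [->|/eqP ne]; first by move/negbTE=> ->; rewrite ?eqxx ?andbF.
by rewrite ?(negbTE ne) ?andbT.
Qed.

Lemma count_snd x p a : uniq (x :: p) ->
  count (fun ab : T * T => ab.2 == a) (zip (x :: p) p) =
  ((a \in x :: p) && (a != x)).
Proof.
move=> U; have Up : uniq p by case/andP: U.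
have := count_uniq_mem a Up.
rewrite -{1}(zip_snd x p) count_map.
have -> : count (preim snd (pred1 a)) (zip (x :: p) p) =
          count (fun ab : T * T => ab.2 == a) (zip (x :: p) p).
  by apply: eq_count => -[c d].
move=> ->; case/andP: U => xp _; rewrite in_cons.
case: eqP => [->|]; first by rewrite (negbTE xp).
by rewrite andbT.
Qed.

Lemma zip_mem_fst x p a b : (a, b) \in zip (x :: p) p -> a \in belast x p.
Proof. by move=> ab; rewrite -zip_fst; apply/mapP; exists (a, b). Qed.

Lemma zip_mem_snd x p a b : (a, b) \in zip (x :: p) p -> b \in p.
Proof. by move=> ab; rewrite -(zip_snd x p); apply/mapP; exists (a, b). Qed.

End Gen.


Section Flow.
Local Open Scope ring_scope.
Variable T : finType.

Lemma sum_count1 (z : seq (T * T)) a :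
  (\sum_b count (pred1 (a, b)) z)%N = count (fun ab : T * T => ab.1 == a) z.
Proof.
elim: z => [|[c d] z IH] /=; first by rewrite big1.
rewrite big_split /= IH; congr (_ + _)%N.
case: (c =P a) => [->|ne].
  rewrite (bigD1 d) //= eqxx big1 // => b /negbTE bd.
  by rewrite xpair_eqE eqxx /= eq_sym bd.
by rewrite big1 // => b _; rewrite xpair_eqE; case: eqP.
Qed.

Lemma sum_count2 (z : seq (T * T)) a :
  (\sum_b count (pred1 (b, a)) z)%N = count (fun ab : T * T => ab.2 == a) z.
Proof.
elim: z => [|[c d] z IH] /=; first by rewrite big1.
rewrite big_split /= IH; congr (_ + _)%N.
case: (d =P a) => [->|ne].
  rewrite (bigD1 c) //= eqxx big1 // => b /negbTE bd.
  by rewrite xpair_eqE eqxx /= eq_sym bd.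
by rewrite big1 // => b _; rewrite xpair_eqE andbC; case: eqP.
Qed.

Definition gp (x : T) (p : seq T) (a b : T) : int :=
  (count (pred1 (a, b)) (zip (x :: p) p))%:R -
  (count (pred1 (b, a)) (zip (x :: p) p))%:R.

Lemma sum_gp x y p a : x != y -> uniq (x :: p) -> last x p = y ->
  \sum_b gp x p a b = (a == x)%:R - (a == y)%:R.
Proof.
move=> xy U L; rewrite /gp sumrB -!natr_sum sum_count1 sum_count2.
rewrite count_fst // count_snd // L.
have yin : y \in x :: p by rewrite -L mem_last.
case: (a =P x) => [->|ax]; first by rewrite mem_head xy (negbTE xy).
case: (a =P y) => [->|ay]; first by rewrite yin.
by case: (a \in x :: p).
Qed.

Lemma cut_sum (f : T -> T -> int) (S : {set T}) :
  (forall a b, f a b = - f b a) ->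
  \sum_(a in S) \sum_b f a b = \sum_(a in S) \sum_(b in ~: S) f a b.
Proof.
move=> sk.
have E : \sum_(a in S) \sum_b f a b =
  \sum_(a in S) \sum_(b in S) f a b + \sum_(a in S) \sum_(b in ~: S) f a b.
  rewrite -big_split /=; apply: eq_bigr => a _.
  rewrite (bigID (mem S)) /=; congr (_ + _); apply: eq_bigl => b.
  by rewrite inE.
have Z : \sum_(a in S) \sum_(b in S) f a b = 0.
  have : \sum_(a in S) \sum_(b in S) f a b = - \sum_(a in S) \sum_(b in S) f a b.
    rewrite [in LHS]exchange_big /= -sumrN; apply: eq_bigr => a _.
    by rewrite -sumrN; apply: eq_bigr => b _; rewrite sk.
  move: (\sum_(a in S) _) => X; lia.
by rewrite E Z add0r.
Qed.

End Flow.


Lemma disjI (U : finType) (A B : {set U}) :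
  (forall E, E \in A -> E \in B -> False) -> [disjoint A & B].
Proof.
move=> H; rewrite disjoint_subset; apply/subsetP => E EA; rewrite inE.
by apply/negP => EB; exact: (H E).
Qed.

Section Menger.
Local Open Scope ring_scope.
Variable T : finType.
Variable h : rel T.
Hypothesis hsym : symmetric h.
Variables x y : T.
Hypothesis xy : x != y.

Definition valid (k : nat) (f : T -> T -> int) : Prop :=
  [/\ forall a b, f a b = - f b a,
      forall a b, -1 <= f a b <= 1,
      forall a b, f a b != 0 -> h a b &
      forall a, \sum_(b : T) f a b = ((a == x) * k)%:R - ((a == y) * k)%:R].

Lemma net_S k (f : T -> T -> int) (S : {set T}) :
  (forall a, \sum_(b : T) f a b = ((a == x) * k)%:R - ((a == y) * k)%:R) ->
  x \in S -> y \notin S -> \sum_(a in S) \sum_(b : T) f a b = k%:R.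
Proof.
move=> C xS yS; rewrite (bigD1 x) //= C eqxx (negbTE xy) mul1n mul0n subr0.
rewrite big1 ?addr0 // => a /andP[aS ax]; rewrite C (negbTE ax).
case: (a =P y) => [ay|]; first by rewrite -ay aS in yS.
by rewrite !mul0n subr0.
Qed.

Lemma exit_edge (r : rel T) (S : {set T}) u v :
  connect r u v -> u \in S -> v \notin S ->
  exists a b, [/\ a \in S, b \notin S & r a b].
Proof.
case/connectP => p; elim: p u => [|w p IH] u /=; first by move=> _ -> ->.
case/andP=> ruw pp L uS vS.
case: (boolP (w \in S)) => wS; first exact: IH pp L wS vS.
by exists u, w.
Qed.

Lemma connect_is_path (r : rel T) u v :
  connect r u v -> exists p, is_path r u v p.
Proof.
case/connectP => p pp ->; case: (shortenP pp) => p' pp' U _.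
by exists p'; rewrite /is_path pp' U eqxx.
Qed.

Lemma count_le1 u p (c : T * T) : uniq (u :: p) ->
  (count (pred1 c) (zip (u :: p) p) <= 1)%N.
Proof.
move=> U; apply: leq_trans (count_fst_le1 c.1 U).
by apply: sub_count => -[a b] /eqP <-.
Qed.

Lemma count_pos u p (c : T * T) :
  (0 < count (pred1 c) (zip (u :: p) p))%N -> c \in zip (u :: p) p.
Proof. by rewrite -has_count has_pred1. Qed.

Lemma valid0 : valid 0 (fun _ _ => 0).
Proof.
split.
- by move=> *; rewrite oppr0.
- by move=> *.
- by move=> a b; rewrite eqxx.
- by move=> a; rewrite big1 // !muln0 subr0.
Qed.

Variable n : nat.
Hypothesis conn : forall F : {set {set T}}, (#|F| < n)%N ->
  connect (fun a b => h a b && ([set a; b] \notin F)) x y.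

Lemma augment k f : valid k f -> (k < n)%N -> exists f', valid k.+1 f'.
Proof.
case=> sk bd sp cons kn.
pose res := fun a b => h a b && (f a b <= 0).
case: (boolP (connect res x y)) => [C|NC].
  case: (connect_is_path C) => p /and3P[pp /eqP L U].
  exists (fun a b => f a b + gp x p a b); split.
  - by move=> a b; rewrite /gp sk; lia.
  - move=> a b; rewrite /gp.
    have c1 := count_le1 (a, b) U; have c2 := count_le1 (b, a) U.
    have i1 : (0 < count (pred1 (a, b)) (zip (x :: p) p))%N -> f a b <= 0.
      by move/count_pos/(path_zip pp)/andP=> [].
    have i2 : (0 < count (pred1 (b, a)) (zip (x :: p) p))%N -> f b a <= 0.
      by move/count_pos/(path_zip pp)/andP=> [].
    have := bd a b; have := bd b a; have := sk a b.
    move: i1 i2 c1 c2; move: (count _ _) (count _ _) (f a b) (f b a).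
    move=> n1 n2 z1 z2; lia.
  - move=> a b; case: (f a b =P 0) => [f0|/eqP]; last by move=> /sp.
    rewrite f0 add0r /gp.
    case: (posnP (count (pred1 (a, b)) (zip (x :: p) p))) => [->|/count_pos].
      case: (posnP (count (pred1 (b, a)) (zip (x :: p) p))) => [->|/count_pos].
        by rewrite subrr eqxx.
      by move/(path_zip pp)/andP=> [hba _] _; rewrite hsym.
    by move/(path_zip pp)/andP=> [].
  - move=> a; rewrite big_split /= cons (sum_gp a xy U L).
    have [_|ax] := eqVneq a x.
      rewrite ?eqxx ?(negbTE xy) /= ?mul1n ?mul0n; lia.
    rewrite ?(negbTE ax); have [_|ay] := eqVneq a y.
      rewrite ?eqxx /= ?mul1n ?mul0n; lia.
    rewrite ?(negbTE ay) /= ?mul0n; lia.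
exfalso.
pose S := [set b | connect res x b].
have xS : x \in S by rewrite inE connect0.
have yS : y \notin S by rewrite inE.
have fab : forall a b, a \in S -> b \notin S -> f a b = (h a b)%:R.
  move=> a b aS bS.
  have nres : ~~ res a b.
    apply/negP => rab; move: bS; rewrite inE; apply/negP/negPn.
    by apply: connect_trans (connect1 rab); rewrite inE in aS.
  case: (boolP (h a b)) => hab.
    move: nres; rewrite /res hab /= => fpos.
    have := bd a b; move: fpos; move: (f a b) => z; lia.
  by case: (f a b =P 0) => // /eqP /sp; rewrite (negbTE hab).
clearbody S.
pose Cs := [set ab : T * T | [&& ab.1 \in S, ab.2 \notin S & h ab.1 ab.2]].
pose F := [set [set ab.1; ab.2] | ab in Cs].
have kC : k = #|Cs|.
  have : (k%:R : int) = (#|Cs|)%:R.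
    rewrite -(net_S cons xS yS) cut_sum //.
    rewrite -sum1_card natr_sum.
    rewrite pair_big_dep /=.
    rewrite [LHS]big_mkcond [RHS]big_mkcond /=.
    apply: eq_bigr => -[a b] _ /=; rewrite !inE /=.
    case: (boolP (a \in S)) => aS //=.
    case: (boolP (b \in S)) => bS //=.
    by rewrite fab //; case: (h a b).
  by move/eqP; rewrite eqr_nat => /eqP.
have FC : (#|F| < n)%N by apply: leq_ltn_trans (leq_imset_card _ _) _; rewrite -kC.
case: (exit_edge (conn FC) xS yS) => a [b [aS bS /andP[hab]]].
apply/negP/negPn; apply/imsetP; exists (a, b) => //; by rewrite !inE /= aS bS hab.
Qed.


Lemma decomp k : forall f, valid k f -> exists Q : nat -> seq T,
  [/\ forall i, (i < k)%N -> is_path h x y (Q i),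
      forall i, (i < k)%N -> forall a b, (a, b) \in zip (x :: Q i) (Q i) -> f a b = 1 &
      forall i j, (i < k)%N -> (j < k)%N -> i != j ->
        [disjoint path_edges x (Q i) & path_edges x (Q j)]].
Proof.
elim: k => [|k IH] f.
  by move=> _; exists (fun _ => [::]); split.
case=> sk bd sp cons.
pose pos := fun a b => f a b == 1.
have C : connect pos x y.
  apply/negPn/negP => NC.
  pose R := [set b | connect pos x b].
  have xR : x \in R by rewrite inE connect0.
  have yR : y \notin R by rewrite inE.
  have := net_S cons xR yR; rewrite cut_sum //.
  have : \sum_(a in R) \sum_(b in ~: R) f a b <= 0.
    apply: sumr_le0 => a aR; apply: sumr_le0 => b; rewrite inE => bR.
    have npos : ~~ pos a b.
      apply/negP => pab; move: bR; rewrite inE; apply/negP/negPn.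
      by apply: connect_trans (connect1 pab); rewrite inE in aR.
    move: npos; rewrite /pos; have := bd a b; move: (f a b) => z; lia.
  move: (\sum_(a in R) _) => X; lia.
case: (connect_is_path C) => p /and3P[pp /eqP L U].
have hp : path h x p.
  by apply: sub_path pp => a b /eqP fab; apply: sp; rewrite fab.
pose f' := fun a b => f a b - gp x p a b.
have i1 : forall a b, (0 < count (pred1 (a, b)) (zip (x :: p) p))%N -> f a b = 1.
  by move=> a b /count_pos/(path_zip pp)/eqP.
have V : valid k f'.
  split.
  - by move=> a b; rewrite /f' /gp sk; lia.
  - move=> a b; rewrite /f' /gp.
    have c1 := count_le1 (a, b) U; have c2 := count_le1 (b, a) U.
    have j1 := i1 a b; have j2 := i1 b a.
    have := bd a b; have := bd b a; have := sk a b.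
    move: j1 j2 c1 c2; move: (count _ _) (count _ _) (f a b) (f b a).
    move=> n1 n2 z1 z2; lia.
  - move=> a b; rewrite /f'; case: (f a b =P 0) => [f0|/eqP]; last by move=> /sp.
    rewrite f0 sub0r oppr_eq0 /gp.
    case: (posnP (count (pred1 (a, b)) (zip (x :: p) p))) => [->|/count_pos].
      case: (posnP (count (pred1 (b, a)) (zip (x :: p) p))) => [->|/count_pos].
        by rewrite subrr eqxx.
      by move/(path_zip hp) => hba _; rewrite hsym.
    by move/(path_zip hp).
  - move=> a; rewrite /f' sumrB cons (sum_gp a xy U L).
    have [_|ax] := eqVneq a x.
      rewrite ?eqxx ?(negbTE xy) /= ?mul1n ?mul0n; lia.
    rewrite ?(negbTE ax); have [_|ay] := eqVneq a y.
      rewrite ?eqxx /= ?mul1n ?mul0n; lia.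
    rewrite ?(negbTE ay) /= ?mul0n; lia.
have f'0 : forall a b, (a, b) \in zip (x :: p) p -> f' a b = 0 /\ f' b a = 0.
  move=> a b ab; have fab : f a b = 1 by move/(path_zip pp): ab => /eqP.
  have c1 : (0 < count (pred1 (a, b)) (zip (x :: p) p))%N by rewrite -has_count has_pred1.
  have c1' := count_le1 (a, b) U.
  have c2 : count (pred1 (b, a)) (zip (x :: p) p) = 0%N.
    apply/eqP; rewrite -leqn0 leqNgt; apply/negP => /i1; rewrite sk fab.
    lia.
  have E : f' a b = 0.
    rewrite /f' /gp c2 fab; move: c1 c1'; move: (count _ _) => c; lia.
  by split => //; rewrite /f' -opprB; have := E; rewrite /f' /gp sk; lia.
case: (IH f' V) => Q [Qp Qf Qd].
exists (fun i => if i is i'.+1 then Q i' else p); split.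
- case=> [|i] /=; first by move=> _; rewrite /is_path hp L eqxx U.
  by move=> ik; apply: Qp.
- case=> [|i] /=; first by move=> _ a b /(path_zip pp)/eqP.
  move=> ik a b ab; have := Qf i ik a b ab; rewrite /f' /gp.
  have c1 := count_le1 (a, b) U; have c2 := count_le1 (b, a) U.
  have j1 := i1 a b; have j2 := i1 b a.
  have := bd a b; have := bd b a; have := sk a b.
  move: j1 j2 c1 c2; move: (count _ _) (count _ _) (f a b) (f b a).
  move=> n1 n2 z1 z2; lia.
have D0 : forall j, (j < k)%N -> [disjoint path_edges x p & path_edges x (Q j)].
  move=> j jk; apply: disjI => E /in_path_edges [a [b [-> ab]]].
  case/in_path_edges => c [d [/set2_eq cd /(Qf j jk)]].
  have [e1 e2] := f'0 a b ab.
  by case: cd => -[<- <-]; rewrite ?e1 ?e2.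
case=> [|i] [|j] //=.
- by move=> _ jk _; apply: D0.
- by move=> ik _ _; rewrite disjoint_sym; apply: D0.
- by move=> ik jk ij; apply: Qd.
Qed.

Lemma exists_valid k : (k <= n)%N -> exists f, valid k f.
Proof.
elim: k => [|k IH] kn; first by exists (fun _ _ => 0); exact: valid0.
case: (IH (ltnW kn)) => f V; exact: augment V kn.
Qed.

Lemma menger : exists Q : nat -> seq T,
  (forall i, (i < n)%N -> is_path h x y (Q i)) /\
  (forall i j, (i < n)%N -> (j < n)%N -> i != j ->
        [disjoint path_edges x (Q i) & path_edges x (Q j)]).
Proof.
case: (exists_valid (leqnn n)) => f V; case: (decomp V) => Q [H1 _ H3].
by exists Q.
Qed.

End Menger.


Section Aux.
Variable T : finType.
Implicit Types (x y a b u : T) (p : seq T).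

Lemma edge_mem E x p z : E \in path_edges x p -> z \in E -> z \in x :: p.
Proof.
case/in_path_edges => a [b [-> ab]] zE.
have : (z == a) || (z == b) by rewrite !inE in zE.
case/orP=> /eqP ->.
  by apply: mem_belast; exact: zip_mem_fst ab.
by rewrite in_cons (zip_mem_snd ab) orbT.
Qed.

Lemma two_nbrs x p u : uniq (x :: p) ->
  #|[set w | [set u; w] \in path_edges x p]| <= 2.
Proof.
move=> U; set z := zip (x :: p) p.
pose s1 := map snd (filter (fun ab : T * T => ab.1 == u) z).
pose s2 := map fst (filter (fun ab : T * T => ab.2 == u) z).
have sub : [set w | [set u; w] \in path_edges x p] \subset [set:: s1 ++ s2].
  apply/subsetP => w; rewrite inE => /in_path_edges [a [b [/set2_eq E ab]]].
  rewrite inE mem_cat; case: E => -[ea eb]; subst a b.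
    by apply/orP; left; apply/mapP; exists (u, w); rewrite // mem_filter eqxx.
  by apply/orP; right; apply/mapP; exists (w, u); rewrite // mem_filter /= eqxx.
apply: leq_trans (subset_leq_card sub) _; rewrite cardsE.
apply: leq_trans (card_size _) _; rewrite size_cat !size_map !size_filter.
have := count_fst_le1 u U; have := count_snd_le1 u U.
by rewrite -/z; move: (count _ _) (count _ _) => c1 c2 h1 h2; rewrite -[2]/(1 + 1); apply: leq_add.
Qed.

Lemma single_edge x y p : uniq (x :: p) -> last x p = y ->
  (x, y) \in zip (x :: p) p -> p = [:: y].
Proof.
case: p => [|c q] //= /andP[xn U] L; rewrite in_cons => /orP[].
  case/eqP=> yc; subst c; case: q U L {xn} => [|d q] //= /andP[yn _] L.
  by move: (mem_last d q); rewrite L (negbTE yn).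
move=> ab; have := zip_mem_fst ab => /mem_belast xin.
by rewrite xin in xn.
Qed.

End Aux.

Unset Implicit Arguments.

Theorem proposition1 (T : finType) (e : rel T) (V1 V2 : {set T})
    (n m : nat) (v1 v2 : T) (P : 'I_m -> seq T) :
  simple_graph e ->
  [disjoint V1 & V2] ->
  V1 :|: V2 = [set: T] ->
  induced_edge_connected e V1 n ->
  induced_edge_connected e V2 n ->
  (forall u, u \in V1 -> m <= #|[set w in V2 | e u w]|) ->
  n + 2 <= m ->
  v1 \in V1 -> v2 \in V2 -> e v1 v2 ->
  (forall i, is_path e v1 v2 (P i)) ->
  (forall i, crossing_path V1 V2 v1 (P i)) ->
  (forall i j, i != j -> P i != P j) ->
  (forall i j, i != j -> [disjoint interior v1 v2 (P i) & interior v1 v2 (P j)]) ->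
  exists Q : 'I_(m + n) -> seq T,
    (forall i, is_path e v1 v2 (Q i)) /\
    (forall i j, i != j -> [disjoint path_edges v1 (Q i) & path_edges v1 (Q j)]).
Proof.
move=> [esym eirr] dis cov [c1 H1] [c2 H2] deg mn v1V v2V ev Pp Pc Pneq Pint.
have side : forall z, z \in V1 -> z \in V2 -> False.
  by move=> z z1 z2; move: (disjointFr dis z1); rewrite z2.
have v12 : v1 != v2 by apply/eqP => E; subst; exact: side v2 v1V v2V.
pose U := \bigcup_(i : 'I_m) path_edges v1 (P i).
have crossE : forall i a b, (a, b) \in zip (v1 :: P i) (P i) ->
    e a b /\ ((a \in V1) && (b \in V2) || (a \in V2) && (b \in V1)).
  move=> i a b ab; split; first by case/and3P: (Pp i) => pp _ _; exact: path_zip pp ab.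
  exact: (allP (Pc i) (a, b) ab).
have intU : forall a b, ((a \in V1) && (b \in V1)) || ((a \in V2) && (b \in V2)) ->
    [set a; b] \notin U.
  move=> a b ab; apply/negP => /bigcupP [i _] /in_path_edges [c [d [/set2_eq E cd]]].
  have [_ cr] := crossE i c d cd.
  by case: E => -[? ?]; subst; move: ab cr;
    case: (boolP (c \in V1)) => c1'; case: (boolP (c \in V2)) => c2';
    case: (boolP (d \in V1)) => d1'; case: (boolP (d \in V2)) => d2' //=;
    try (by exfalso; apply: (side c)); try (by exfalso; apply: (side d)).
pose H := fun a b => e a b && ([set a; b] \notin U).
have Hsym : symmetric H by move=> a b; rewrite /H esym setUC.
have Puniq : forall i, uniq (v1 :: P i) by move=> i; case/and3P: (Pp i).
have Plast : forall i, last v1 (P i) = v2 by move=> i; case/and3P: (Pp i) => _ /eqP.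
have conn : forall F : {set {set T}}, #|F| < n ->
    connect (fun a b => H a b && ([set a; b] \notin F)) v1 v2.
  move=> F Fn.
  have : 0 < #|V1 :\ v1| by move: c1; rewrite (cardsD1 v1) v1V.
  case/card_gt0P => u; rewrite !inE => /andP[uv1 uV].
  pose N := [set w in V2 | e u w]; pose W := [set w | [set u; w] \in U].
  have uint : forall i w, [set u; w] \in path_edges v1 (P i) -> u \in interior v1 v2 (P i).
    move=> i w Ew; rewrite inE (edge_mem Ew (set21 u w)) uv1 /=.
    by apply/eqP => uv2; subst; exact: side v2 uV v2V.
  have Wle : #|W| <= 2.
    case: (set_0Vmem W) => [->|[w0]]; first by rewrite cards0.
    rewrite inE => /bigcupP [i0 _ E0].
    apply: leq_trans (two_nbrs u (Puniq i0)); apply: subset_leq_card.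
    apply/subsetP => w; rewrite !inE => /bigcupP [i _ Ew].
    case: (i =P i0) => [e0|/eqP ne]; first by move: Ew; rewrite e0 inE. exfalso.
    by move: (disjointFr (Pint i i0 ne) (uint _ _ Ew)); rewrite (uint _ _ E0).
  have [w [wN wW wF]] : exists w, [/\ w \in N, w \notin W & [set u; w] \notin F].
    case: (pickP (fun w => [&& w \in N, w \notin W & [set u; w] \notin F])) => [w /and3P[? ? ?]|none].
      by exists w.
    exfalso.
    have sub : [set [set u; w] | w in N :\: W] \subset F.
      apply/subsetP => E /imsetP [w wNW ->]; apply/negPn/negP => nF.
      move: (none w); rewrite nF andbT; move: wNW; rewrite in_setD.
      by case/andP => -> ->.
    have inj : {in N :\: W &, injective (fun w => [set u; w])}.
      move=> w w' wNW _ /set2_eq [[_ //]|[uw' wu]]; exfalso.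
      move: wNW; rewrite wu in_setD => /andP[_]; rewrite /N inE => /andP[uV2 _].
      exact: side u uV uV2.
    have := subset_leq_card sub; rewrite (card_in_imset inj) => le.
    have := cardsID W N; have := deg u uV; rewrite -/N.
    have : #|N :&: W| <= #|W| by apply: subset_leq_card; apply: subsetIr.
    move: le Wle Fn mn; move: #|_| #|_| #|_| #|_| #|_|; lia.
  move: wN; rewrite inE => /andP[wV euw].
  have uw : H u w && ([set u; w] \notin F).
    by rewrite /H euw wF andbT; move: wW; rewrite inE.
  have p1 : connect (fun a b => H a b && ([set a; b] \notin F)) v1 u.
    apply: connect_sub (H1 F Fn v1 u v1V uV) => a b /and4P[aV bV eab nF].
    by apply: connect1; rewrite /H eab nF intU //= aV bV.
  have p3 : connect (fun a b => H a b && ([set a; b] \notin F)) w v2.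
    apply: connect_sub (H2 F Fn w v2 wV v2V) => a b /and4P[aV bV eab nF].
    by apply: connect1; rewrite /H eab nF intU //= aV bV orbT.
  have p2 : connect (fun a b => H a b && ([set a; b] \notin F)) u w by apply: connect1.
  exact: (connect_trans p1 (connect_trans p2 p3)).
have [Qn [Qp Qd]] := menger Hsym v12 conn.
have key : forall a b : 'I_m, a != b -> forall c d,
    (c, d) \in zip (v1 :: P a) (P a) -> c \in v1 :: P b -> d \in v1 :: P b ->
    P a = [:: v2].
  move=> a b ab c d cd cb db.
  have cint : forall z, z \in v1 :: P a -> z \in v1 :: P b -> z = v1 \/ z = v2.
    move=> z za zb; case: (z =P v1) => [|/eqP z1]; first by left.
    case: (z =P v2) => [|/eqP z2]; first by right.
    exfalso; have zia : z \in interior v1 v2 (P a) by rewrite inE za z1 z2.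
    have zib : z \in interior v1 v2 (P b) by rewrite inE zb z1 z2.
    by move: (disjointFr (Pint a b ab) zia); rewrite zib.
  have cb' := zip_mem_fst cd; have da := zip_mem_snd cd.
  have ec : c = v1.
    case: (cint c (mem_belast cb') cb) => // cv2.
    by move: (last_notin_belast (Puniq a)); rewrite Plast -cv2 cb'.
  have ed : d = v2.
    case: (cint d _ db) => //; first by rewrite in_cons da orbT.
    by move=> dv1; move: (Puniq a); rewrite /= -dv1 da.
  by subst; apply: single_edge (Puniq a) (Plast a) cd.
have PPd : forall a b : 'I_m, a != b ->
    [disjoint path_edges v1 (P a) & path_edges v1 (P b)].
  move=> a b ab; apply: disjI => E Ea Eb.
  have Ea' := Ea; have Eb' := Eb.
  case/in_path_edges: Ea => c [d [Ecd cd]].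
  case/in_path_edges: Eb => c' [d' [Ecd' cd']].
  have Pa : P a = [:: v2].
    by apply: (key a b ab c d cd); apply: (edge_mem Eb'); rewrite Ecd !inE eqxx ?orbT.
  have Pb : P b = [:: v2].
    by apply: (key b a _ c' d' cd'); rewrite 1?eq_sym //; apply: (edge_mem Ea');
      rewrite Ecd' !inE eqxx ?orbT.
  by move: (Pneq a b ab); rewrite Pa Pb eqxx.
have PQd : forall (a : 'I_m) k, k < n ->
    [disjoint path_edges v1 (P a) & path_edges v1 (Qn k)].
  move=> a k kn; apply: disjI => E Ea Eb.
  case/in_path_edges: Eb => c [d [Ecd cd]].
  have : H c d by case/and3P: (Qp k kn) => pp _ _; exact: path_zip pp cd.
  case/andP=> _; rewrite -Ecd; apply/negP/negPn.
  by apply/bigcupP; exists a.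
exists (fun i => match split i with inl j => P j | inr j => Qn j end); split.
  move=> i; case: (split i) => [j|j]; first exact: Pp.
  case/and3P: (Qp j (ltn_ord j)) => pp lq uq; rewrite /is_path lq uq andbT.
  by rewrite andbT; apply: (sub_path _ pp) => a b /andP[].
move=> i j ij.
have sK := @splitK m n.
case Ei: (split i) => [a|a]; case Ej: (split j) => [b|b].
- apply: PPd; apply/eqP => ab; subst; move/eqP: ij; apply.
  by rewrite -(sK i) -(sK j) Ei Ej.
- exact: PQd.
- by rewrite disjoint_sym; apply: PQd.
- apply: Qd => //; apply/eqP => ab; move/eqP: ij; apply.
  by rewrite -(sK i) -(sK j) Ei Ej; congr unsplit; congr inr; apply: val_inj.
Qed.
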